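(* Let $d$ be a positive integer and let $A\in\mathbb{R}^{[m]\times[n]}$ be a matrix that does not have an elimination ordering. Let $E\subseteq[n]$ be the set produced by the following procedure: start with $E=\emptyset$; while $\mathrm{elm}(A,E)$ can be eliminated at some column, choose such a column $j\in[n]\setminus E$ and set $E\leftarrow E\cup\{j\}$. Let $\Delta=[n]\setminus E$ and let $A^r$ be the submatrix of $A$ consisting of the columns indexed by $\Delta$ (so $A^r\in\mathbb{R}^{[m]\times\Delta}$, and feasible solutions of $(A^r,b^r)$ lie in $D^{\Delta}$). If there exists $b^r\in\mathbb{R}^{[m]}$ such that the solution graph $G(R(A^r,b^r))$ is not connected, then there exists $b\in\mathbb{R}^{[m]}$ such that the solution graph $G(R(A,b))$ is not connected.
   Context: Fix a positive integer $d$ and let $D=\{0,1,\dots,d\}$; $[n]=\{1,\dots,n\}$. For a real matrix $A$ with row set $[m]$ and column index set $J$, and $b\in\mathbb{R}^{[m]}$, $R(A,b)=\{x\in D^{J} : Ax\ge b\}$. For $R\subseteq D^{J}$, the solution graph $G(R)$ is the undirected graph with vertex set $R$ in which $x,y$ are adjacent iff they differ in exactly one coordinate. A matrix $A=(a_{ij})$ with column index set $J$ can be eliminated at column $j\in J$ if (i) for every row $i$ with $a_{ij}>0$ we have $a_{ij'}=0$ for all $j'\in J\setminus\{j\}$, or (ii) for every row $i$ with $a_{ij}<0$ we have $a_{ij'}=0$ for all $j'\in J\setminus\{j\}$. For $J'\subseteq[n]$, $\mathrm{elm}(A,J')$ is the submatrix of $A$ obtained by deleting the columns indexed by $J'$.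 A sequence $(j_1,\dots,j_n)$ of the elements of $[n]$ is an elimination ordering (EO) of $A\in\mathbb{R}^{[m]\times[n]}$ if for every $t\in[n]$ the matrix $\mathrm{elm}(A,\{j_1,\dots,j_{t-1}\})$ can be eliminated at column $j_t$. *)

(* Defs.v *)
From HB Require Import structures.
From mathcomp Require Import all_boot all_order all_algebra.
From mathcomp Require Import reals.
Set Implicit Arguments. Unset Strict Implicit. Unset Printing Implicit Defensive.
Import Order.TTheory GRing.Theory Num.Theory.
Local Open Scope ring_scope.


Definition feasible (R : realType) (d m : nat) (J : finType) (A : 'I_m -> J -> R) (b : 'I_m -> R)
  (x : {ffun J -> 'I_d.+1}) : bool :=
  [forall i : 'I_m, b i <= \sum_(j : J) A i j * (x j)%:R].
Arguments feasible {R} d {m J} A b x.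

Definition adjacent (d : nat) (J : finType) (x y : {ffun J -> 'I_d.+1}) : bool :=
  #|[set j : J | x j != y j]| == 1%N.

Definition sol_edge (R : realType) (d m : nat) (J : finType) (A : 'I_m -> J -> R) (b : 'I_m -> R)
  : rel {ffun J -> 'I_d.+1} :=
  fun x y => [&& feasible d A b x, feasible d A b y & adjacent x y].
Arguments sol_edge {R} d {m J} A b.

Definition sol_graph_connected (R : realType) (d m : nat) (J : finType) (A : 'I_m -> J -> R)
  (b : 'I_m -> R) : Prop :=
  forall x y : {ffun J -> 'I_d.+1}, feasible d A b x -> feasible d A b y ->
    connect (sol_edge d A b) x y.
Arguments sol_graph_connected {R} d {m J} A b.

(** elm(A, [n] \ S) (the columns in S remain) can be eliminated at column j *)
Definition can_elim (R : realType) (m n : nat) (A : 'M[R]_(m, n)) (S : {set 'I_n}) (j : 'I_n) : Prop :=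
  j \in S /\
  ((forall i : 'I_m, 0 < A i j -> forall j', j' \in S -> j' != j -> A i j' = 0) \/
   (forall i : 'I_m, A i j < 0 -> forall j', j' \in S -> j' != j -> A i j' = 0)).
Arguments can_elim {R m n} A S j.

Fixpoint elim_run (R : realType) (m n : nat) (A : 'M[R]_(m, n)) (S : {set 'I_n}) (s : seq 'I_n) : Prop :=
  match s with
  | [::] => True
  | j :: s' => can_elim A S j /\ elim_run A (S :\ j) s'
  end.
Arguments elim_run {R m n} A S s.

Definition is_EO (R : realType) (m n : nat) (A : 'M[R]_(m, n)) (s : seq 'I_n) : Prop :=
  perm_eq s (enum 'I_n) /\ elim_run A [set: 'I_n] s.
Arguments is_EO {R m n} A s.

Definition has_EO (R : realType) (m n : nat) (A : 'M[R]_(m, n)) : Prop := exists s, is_EO A s.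
Arguments has_EO {R m n} A.

Definition greedy_output (R : realType) (m n : nat) (A : 'M[R]_(m, n)) (E : {set 'I_n}) : Prop :=
  exists s : seq 'I_n, elim_run A [set: 'I_n] s /\ E = [set j in s] /\
    ~ (exists j, can_elim A (~: E) j).
Arguments greedy_output {R m n} A E.

Definition restr_cols (R : realType) (m n : nat) (A : 'M[R]_(m, n)) (Delta : {set 'I_n})
  : 'I_m -> {j : 'I_n | j \in Delta} -> R :=
  fun i j => A i (val j).
Arguments restr_cols {R} {m n} A Delta i j.

(* Main.v *)
Require Import Defs.
From HB Require Import structures.
From mathcomp Require Import all_boot all_order all_algebra.
From mathcomp Require Import reals.
Import Order.TTheory GRing.Theory Num.Theory.
Local Open Scope ring_scope.

Lemma sum_sig (R : realType) n (S : {set 'I_n}) (F : 'I_n -> R) :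
  \sum_(j : {j : 'I_n | j \in S}) F (val j) = \sum_(j in S) F j.
Proof.
rewrite (reindex_omap (val : {j : 'I_n | j \in S} -> 'I_n) insub); last first.
  by move=> i iS; rewrite insubT.
by apply: eq_bigl=> -[i iS]/=; rewrite insubT ?iS /= eqxx.
Qed.

Lemma run_step (R : realType) m n (A : 'M[R]_(m, n)) (s : seq 'I_n) (S : {set 'I_n}) :
  elim_run A S s -> forall j, j \in s -> exists S', can_elim A S' j /\ S :\: [set x in s] \subset S'.
Proof.
elim: s S => [|k s IH] S //= [Hk Hr] j; rewrite inE => /orP[/eqP->|js].
  by exists S; split => //; apply: subsetDl.
have [S' [H1 H2]] := IH _ Hr j js; exists S'; split => //.
apply: subset_trans H2; apply/subsetP => x; rewrite !inE.
by case: (x == k) => //=; rewrite andbF.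
Qed.
Lemma split_sum (R : realType) n (E : {set 'I_n}) (F : 'I_n -> R) :
  \sum_j F j = \sum_(k : {j : 'I_n | j \in ~: E}) F (val k) + \sum_(j in E) F j.
Proof.
rewrite (bigID (mem (~: E))) /= sum_sig; congr (_ + _).
by apply: eq_bigl => j; rewrite /= in_setC negbK.
Qed.

Lemma connect_map (T T' : finType) (e : rel T) (e' : rel T') (f : T -> T') :
  (forall u w, e u w -> connect e' (f u) (f w)) ->
  forall u v, connect e u v -> connect e' (f u) (f v).
Proof.
move=> He u v /connectP [p Hp ->]; elim: p u Hp => [|a p IH] u /=.
  by move=> _; exact: connect0.
by case/andP=> Hua Hp; apply: connect_trans (He _ _ Hua) (IH _ Hp).
Qed.

Theorem lemma2 (R : realType) (d m n : nat) (A : 'M[R]_(m, n)) (E : {set 'I_n}) :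
  (0 < d)%N ->
  ~ has_EO A ->
  greedy_output A E ->
  (exists br : 'I_m -> R, ~ sol_graph_connected d (restr_cols A (~: E)) br) ->
  exists b : 'I_m -> R, ~ sol_graph_connected d (fun i j => A i j) b.
Proof.
move=> _ _ [s [Hrun [HE _]]] [br Hbr].
pose c j := [forall i, (0 < A i j) ==> [forall j' in ~: E, A i j' == 0]].
pose z j : 'I_d.+1 := if c j then ord0 else ord_max.
have Hkey : forall i j, j \in E -> [exists j' in ~: E, A i j' != 0] ->
    forall w : 'I_d.+1, A i j * w%:R <= A i j * (z j)%:R.
  move=> i j jE /existsP [j' /andP [j'D Aj'] ] w.
  have js : j \in s by move: jE; rewrite HE inE.
  have [S' [[_ Hce] HS']] := @run_step _ _ _ A s _ Hrun j js.
  have DS : ~: E \subset S'.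
    apply: (subset_trans _ HS'); apply/subsetP => x; by rewrite !inE HE inE andbT.
  have j'S : j' \in S' by apply: (subsetP DS).
  have j'j : j' != j by apply/eqP => ej; move: j'D; rewrite ej in_setC jE.
  rewrite /z; case cj: (c j).
    rewrite mulr0; apply: mulr_le0_ge0; last exact: ler0n.
    rewrite leNgt; apply/negP => Ap.
    by move/forallP: cj => /(_ i) /implyP /(_ Ap) /forallP /(_ j') /implyP /(_ j'D) /eqP Az; rewrite Az eqxx in Aj'.
  case: Hce => Hce.
    exfalso; move/negbT: cj => /negP; apply; apply/forallP => i'; apply/implyP => Ap.
    apply/forallP => k; apply/implyP => kD; apply/eqP.
    have kj : k != j by apply/eqP => ej; move: kD; rewrite ej in_setC jE.
    exact: Hce i' Ap k (subsetP DS k kD) kj.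
  have Ap : 0 <= A i j.
    rewrite leNgt; apply/negP => An.
    by move: Aj'; rewrite (Hce i An j' j'S j'j) eqxx.
  by apply: ler_wpM2l => //; rewrite ler_nat -ltnS ltn_ord.
pose b i := br i + \sum_(j in E) A i j * (z j)%:R.
exists b => Hc; apply: Hbr => x y fx fy.
pose proj (w : {ffun 'I_n -> 'I_d.+1}) : {ffun {j : 'I_n | j \in ~: E} -> 'I_d.+1} :=
  [ffun k => w (val k)].
pose lift (x : {ffun {j : 'I_n | j \in ~: E} -> 'I_d.+1}) : {ffun 'I_n -> 'I_d.+1} :=
  [ffun j => match (insub j : option {j : 'I_n | j \in ~: E}) with Some k => x k | None => z j end].
have projK : forall x, proj (lift x) = x.
  move=> x'; apply/ffunP => k; rewrite !ffunE.
  case: insubP => [u _ /val_inj -> //|].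
  by rewrite (valP k).
have liftF : forall x, feasible d (restr_cols A (~: E)) br x -> feasible d (fun i j => A i j) b (lift x).
  move=> x' /forallP fx'; apply/forallP => i; rewrite (@split_sum _ _ E) /b lerD //.
    apply: le_trans (fx' i) _; rewrite le_eqVlt; apply/orP; left; apply/eqP; apply: eq_bigr => k _.
    by rewrite /restr_cols ffunE; case: insubP => [u _ /val_inj -> //|]; rewrite (valP k).
  rewrite le_eqVlt; apply/orP; left; apply/eqP; apply: eq_bigr => j jE; rewrite ffunE.
  by case: insubP => [u|//]; rewrite in_setC jE.
have projF : forall w, feasible d (fun i j => A i j) b w -> feasible d (restr_cols A (~: E)) br (proj w).
  move=> w /forallP fw; apply/forallP => i.
  case ex: [exists j' in ~: E, A i j' != 0].
    have := fw i; rewrite (@split_sum _ _ E) /b => H.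
    have HE2 : \sum_(j in E) A i j * (w j)%:R <= \sum_(j in E) A i j * (z j)%:R.
      by apply: ler_sum => j jE; apply: Hkey.
    rewrite -(lerD2r (\sum_(j in E) A i j * (z j)%:R)).
    apply: (le_trans H); apply: lerD; last exact: HE2.
    rewrite le_eqVlt; apply/orP; left; apply/eqP; apply: eq_bigr => k _.
    by rewrite /restr_cols ffunE.
  have Z : forall k : {j : 'I_n | j \in ~: E}, A i (val k) = 0.
    move=> k; apply/eqP; move/negbT: ex; rewrite negb_exists => /forallP /(_ (val k)).
    by rewrite (valP k) /= negbK.
  move/forallP: fx => /(_ i); rewrite big1 => [Hx|k _]; last by rewrite /restr_cols Z mul0r.
  by rewrite big1 // => k _; rewrite /restr_cols Z mul0r.
have Hedge : forall u w, sol_edge d (fun i j => A i j) b u w ->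
    connect (sol_edge d (restr_cols A (~: E)) br) (proj u) (proj w).
  move=> u w /and3P [fu fw adj].
  case: (eqVneq (proj u) (proj w)) => [->|ne]; first exact: connect0.
  apply: connect1; rewrite /sol_edge (projF _ fu) (projF _ fw) /=.
  have [k0 Hk0] : exists k0, proj u k0 != proj w k0.
    apply/existsP; move: ne; apply: contraR; rewrite negb_exists => /forallP H.
    by apply/eqP/ffunP => k; move: (H k); rewrite negbK => /eqP.
  move/cards1P: adj => [j0 Hj0].
  rewrite /adjacent; apply/cards1P; exists k0; apply/setP => k; rewrite !inE.
  apply/idP/eqP => [Hk|->//]; apply: val_inj.
  have : val k \in [set j | u j != w j] by rewrite inE -!(ffunE (fun k => _ (val k))) ; exact: Hk.
  have : val k0 \in [set j | u j != w j] by rewrite inE; move: Hk0; rewrite !ffunE.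
  by rewrite Hj0 !inE => /eqP -> /eqP ->.
have := Hc (lift x) (lift y) (liftF _ fx) (liftF _ fy).
move/(@connect_map _ _ _ _ proj Hedge).
by rewrite !projK.
Qed.
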